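(* Let $X$ be a topological space and $A$ a $T_1$-closed subspace of $X$. Then $\mathrm{r}_{\mathcal C_1}A=\mathrm{r}_{(X,\mathcal C_1)}(A)$; that is, the map $\mathrm{r}_{\mathcal C_1}(i)\colon\mathrm{r}_{\mathcal C_1}A\to\mathrm{r}_{\mathcal C_1}X$ induced by the inclusion $i\colon A\hookrightarrow X$ is a homeomorphism of $\mathrm{r}_{\mathcal C_1}A$ onto the subspace $\mathrm{r}_{(X,\mathcal C_1)}(A)$ of $\mathrm{r}_{\mathcal C_1}X$.
   Context: $\mathcal C_1$ is the epireflective subcategory of $\mathbf{Top}$ of $T_1$ spaces; $\mathrm{r}_{\mathcal C_1}X$ is the $T_1$-reflection of $X$ with universal continuous surjection $\mathrm{r}_{(X,\mathcal C_1)}\colon X\to\mathrm{r}_{\mathcal C_1}X$ (every continuous map from $X$ into a $T_1$ space factors uniquely through it), and $\mathrm{r}_{\mathcal C_1}(f)$ denotes the induced map for continuous $f$. A subset of $X$ is $T_1$-open if it belongs to the topology generated by all sets $f^{-1}(U)$ with $f\colon X\to Y$ continuous, $Y$ a $T_1$ space, $U$ open in $Y$; it is $T_1$-closed if its complement is $T_1$-open. *)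

(* Defs.v *)
From HB Require Import structures.
From mathcomp Require Import all_boot all_order all_algebra.
From mathcomp Require Import all_classical all_reals all_analysis.
Set Implicit Arguments. Unset Strict Implicit. Unset Printing Implicit Defensive.
Local Open Scope classical_set_scope.

(* T1 spaces are MathComp-Analysis' [accessible_space]. *)

Definition is_T1_reflection (X Y : topologicalType) (r : X -> Y) : Prop :=
  [/\ accessible_space Y, continuous r, (forall y, exists x, r x = y) &
      forall (Z : topologicalType) (f : X -> Z),
        accessible_space Z -> continuous f ->
        exists! h : Y -> Z, continuous h /\ f = h \o r].

(* U is T1-open: U belongs to the topology generated by all f^-1(V), f : X -> Y
   continuous, Y T1, V open in Y (the smallest family containing these
   generators, setT, and closed under binary intersections and arbitrary unions). *)
Definition T1_open (X : topologicalType) (U : set X) : Prop :=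
  forall P : set (set X),
    (forall (Y : topologicalType) (f : X -> Y), accessible_space Y ->
       continuous f -> forall V : set Y, open V -> P (f @^-1` V)) ->
    P setT ->
    (forall B C, P B -> P C -> P (B `&` C)) ->
    (forall (I : Type) (F : I -> set X), (forall i, P (F i)) -> P (\bigcup_i F i)) ->
    P U.

Definition T1_closed (X : topologicalType) (A : set X) : Prop := T1_open (~` A).

Definition is_homeomorphism (S T : topologicalType) (h : S -> T) : Prop :=
  exists k : T -> S, [/\ cancel h k, cancel k h, continuous h & continuous k].

(* Main.v *)
Require Import Defs.
From HB Require Import structures.
From mathcomp Require Import all_boot all_order all_algebra.
From mathcomp Require Import all_classical all_reals all_analysis.
Local Open Scope classical_set_scope.

Definition final_top (S : topologicalType) (T : choiceType) (f : S -> T) : Type := T.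
Arguments final_top {S T} f.
Section Final.
Variables (S : topologicalType) (T : choiceType) (f : S -> T).
Local Notation W := (final_top f).
Definition fopen (U : set W) := open (f @^-1` U).
Lemma fopT : fopen setT. Proof. exact: openT. Qed.
Lemma fopI : setI_closed fopen.
Proof. move=> B C hB hC; exact: openI. Qed.
Lemma fop_bigU (I : Type) (g : I -> set W) : (forall i, fopen (g i)) -> fopen (\bigcup_i g i).
Proof. move=> h; rewrite /fopen preimage_bigcup; apply: bigcup_open => i _; exact: h. Qed.
HB.instance Definition _ := Choice.on W.
HB.instance Definition _ := isOpenTopological.Build W fopT fopI fop_bigU.
Lemma final_openE (U : set W) : open U = open (f @^-1` U).
Proof. by []. Qed.
Lemma final_continuous : continuous (f : S -> W).
Proof. by apply/continuousP => A. Qed.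
End Final.

Lemma T1_open_sat (X RX : topologicalType) (rX : X -> RX) (U : set X) :
  is_T1_reflection rX -> T1_open U ->
  open U /\ (forall x y, rX x = rX y -> U x -> U y).
Proof.
move=> [acX cX sX uX] hU; apply: (hU (fun U => open U /\ (forall x y, rX x = rX y -> U x -> U y))).
- move=> Y f acY cf V oV; split; first by move/continuousP: cf; apply.
  have [h [[ch fE] _]] := uX Y f acY cf.
  by move=> x y e; rewrite /= fE /= e.
- by split; [exact: openT|].
- move=> B C [oB sB] [oC sC]; split; first exact: openI.
  by move=> x y e [Bx Cx]; split; [exact: sB e Bx|exact: sC e Cx].
- move=> I F hF; split; first by apply: bigcup_open => i _; case: (hF i).
  by move=> x y e [i _ Fx]; exists i => //; case: (hF i) => _; apply; [exact: e|].
Qed.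
Arguments T1_open_sat {X RX rX U}.
Section Main.
Variables (X : topologicalType) (A : set X) (RX : topologicalType) (rX : X -> RX)
  (RA : topologicalType) (rA : set_type A -> RA).
Hypothesis hA : T1_closed A.
Hypothesis hX : is_T1_reflection rX.
Hypothesis hRA : is_T1_reflection rA.

Definition Ff (x : X) : (RA + RX)%type :=
  match pselect (A x) with
  | left hx => inl (rA (exist _ x (mem_set hx)))
  | right _ => inr (rX x)
  end.

Lemma FfA (x : X) (hx : x \in A) : Ff x = inl (rA (exist _ x hx)).
Proof.
rewrite /Ff; case: pselect => [h|h]; last by case: h; exact: set_mem.
by rewrite (Prop_irrelevance (mem_set h) hx).
Qed.

Lemma FfN (x : X) : ~ A x -> Ff x = inr (rX x).
Proof. by rewrite /Ff; case: pselect. Qed.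

Lemma A_closed : closed A.
Proof.
have [oA _] := T1_open_sat hX hA.
by rewrite -openC.
Qed.

Lemma nA_sat (x y : X) : rX x = rX y -> ~ A x -> ~ A y.
Proof. have [_ s] := T1_open_sat hX hA; exact: s. Qed.

Local Notation Z := (final_top Ff).

Lemma val_closed (D : set (set_type A)) : closed D -> closed (set_val @` D).
Proof.
rewrite -openC => -[V oV VE].
have -> : set_val @` D = A `&` ~` V.
  apply/seteqP; split.
    move=> _ [s Ds <-]; split; first exact: set_valP.
    move=> Vs; have : (set_val @^-1` V) s by [].
    by rewrite VE.
  move=> x [Ax nVx]; exists (exist _ x (mem_set Ax)) => //.
  apply: contrapT => nD.
  have : (~` D) (exist _ x (mem_set Ax)) by [].
  by rewrite -VE.
apply: closedI; first exact: A_closed.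
by rewrite closedC.
Qed.

Lemma Z_acc : accessible_space Z.
Proof.
have cl1 : forall z : Z, closed (Ff @^-1` [set z]).
  case=> [p|q].
    have -> : Ff @^-1` [set inl p] = set_val @` (rA @^-1` [set p]).
      apply/seteqP; split.
        move=> x; rewrite /Ff /=; case: pselect => // hx [<-].
        by exists (exist _ x (mem_set hx)).
      move=> _ [s <- <-] /=; case: s => x hx /=.
      by rewrite (@FfA x hx).
    apply: val_closed.
    have [acA cA _ _] := hRA.
    move: (@accessible_closed_set1 _ acA p); rewrite -!openC => oo.
    by rewrite preimage_setC; exact: (proj1 (continuousP rA) cA _ oo).
  have [[x0 [nA0 e0]]|none] := pselect (exists x, ~ A x /\ rX x = q).
    have -> : Ff @^-1` [set inr q] = rX @^-1` [set q].
      apply/seteqP; split.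
        by move=> x; rewrite /Ff /=; case: pselect => // hx [<-].
      move=> x /= ex; have nAx : ~ A x by apply: (@nA_sat x0 x _ nA0); rewrite e0 ex.
      by rewrite (@FfN x nAx) ex.
    have [acX cX _ _] := hX.
    move: (@accessible_closed_set1 _ acX q); rewrite -!openC => oo.
    by rewrite preimage_setC; exact: (proj1 (continuousP rX) cX _ oo).
  have -> : Ff @^-1` [set inr q] = set0.
    apply/seteqP; split => // x; rewrite /Ff /=; case: pselect => // hx [ex].
    by case: none; exists x.
  exact: closed0.
move=> x y nxy; exists (~` [set y]); split.
- rewrite final_openE; have := cl1 y; rewrite -openC.
  by rewrite preimage_setC.
- by apply: mem_set => /= ex; move/eqP: nxy.
- by apply: mem_set => /=; apply.
Qed.
End Main.
Arguments Ff {X A RX} rX {RA} rA.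
Arguments FfA {X A RX rX RA rA x}.
Arguments FfN {X A RX rX RA rA x}.
Arguments A_closed {X A RX rX}.
Arguments Z_acc {X A RX rX RA rA}.

Theorem theorem5p10 (X : topologicalType) (A : set X)
  (RX : topologicalType) (rX : X -> RX)
  (RA : topologicalType) (rA : set_type A -> RA)
  (g : RA -> RX) :
  T1_closed A ->
  is_T1_reflection rX ->
  is_T1_reflection rA ->
  continuous g -> g \o rA = rX \o set_val ->
  exists h : RA -> set_type (rX @` A),
    is_homeomorphism h /\ forall y, set_val (h y) = g y.
Proof.
move=> hA hX hRA cg hg.
pose F := Ff rX rA.
have [acX cX sX uX] := hX.
have [acA cA sA uA] := hRA.
have [hZ [[chZ FE] _]] := uX (final_top F) F (Z_acc hA hX hRA) (@final_continuous _ _ F).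
have hZrX : forall x, hZ (rX x) = F x by move=> x; rewrite FE.
have hmem : forall y, g y \in rX @` A.
  move=> y; apply: mem_set; have [a <-] := sA y.
  have := congr1 (fun f => f a) hg => /= ->.
  by exists (set_val a) => //; exact: set_valP.
pose h := fun y => exist (fun z => z \in rX @` A) (g y) (hmem y).
pose pa := fun s : set_type (rX @` A) => cid2 (set_valP s).
pose k := fun s : set_type (rX @` A) =>
  rA (exist (fun x => x \in A) (s2val (pa s)) (mem_set (s2valP (pa s)))).
have hZk : forall s, hZ (set_val s) = inl (k s).
  move=> s; transitivity (hZ (rX (s2val (pa s)))).
    by congr (hZ _); symmetry; exact: (s2valP' (pa s)).
  rewrite hZrX /F; exact: FfA.
exists h; split => //.
exists k; split.
- move=> y; have [a <-] := sA y.
  suff : (inl (k (h (rA a))) : (RA + RX)%type) = inl (rA a) by case.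
  rewrite -hZk; transitivity (hZ (g (rA a))); first by [].
  have -> : g (rA a) = rX (set_val a) by exact: (congr1 (fun f => f a) hg).
  rewrite hZrX /F; by case: a => x hx; exact: FfA.
- move=> s; apply: eq_sig_hprop => /=.
    by move=> z p q; exact: Prop_irrelevance.
  rewrite -[g (k s)]/((g \o rA) _) hg /=.
  exact: (s2valP' (pa s)).
- apply/continuousP => U [W oW <-].
  exact: (proj1 (continuousP g) cg W oW).
- apply/continuousP => V oV.
  pose S := fun z : (RA + RX)%type => match z with inl p => V p | inr _ => True end.
  have -> : k @^-1` V = (hZ \o set_val) @^-1` S.
    by apply/seteqP; split => s /=; rewrite hZk.
  apply: (proj1 (continuousP _)); first first.
  + rewrite final_openE.
    have [W1 oW1 OE] := proj1 (continuousP rA) cA V oV.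
    have -> : F @^-1` S = W1 `|` ~` A.
      apply/seteqP; split => x /=.
        rewrite /F /Ff; case: pselect => hx /=; last by right.
        rewrite -[V _]/((rA @^-1` V) _) -OE /=; by left.
      case: (pselect (A x)) => hx; last first.
        by move=> _; rewrite /F (FfN hx).
      case=> // Ox; rewrite /F (FfA (mem_set hx)) /=.
      by rewrite -[V _]/((rA @^-1` V) _) -OE.
    apply: openU => //; rewrite openC; exact: (A_closed hA hX).
  + move=> s; apply: continuous_comp; last exact: chZ.
    exact: initial_continuous.
Qed.
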